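(* Fix integers $\ell<\mu<u$ and a scale $s>0$. Let $Z$ be the random variable on $\{\ell,\ell+1,\dots,u\}$ with $$\Pr[Z=k]=\begin{cases}F(\ell\mid\mu,s)&k=\ell,\\ p(k\mid\mu,s)&\ell<k<u,\\ 1-F(u-1\mid\mu,s)&k=u,\\ 0&\text{otherwise},\end{cases}$$ where $p(k\mid\mu,s)=\frac{e^{1/s}-1}{e^{1/s}+1}e^{-|k-\mu|/s}$ and $F(x\mid\mu,s)=\frac{e^{1/s}}{e^{1/s}+1}e^{-(\mu-x)/s}$ if $x\le\mu$, and $F(x\mid\mu,s)=1-\frac{1}{e^{1/s}+1}e^{-(x-\mu)/s}$ if $x>\mu$. If the support $\{\ell,\dots,u\}$ contains at least four points, then there exists $k\in\{\ell,\dots,u\}$ such that $\Pr[Z=k]\notin\{t/2^N: t,N\in\mathbb{N}\}$, i.e. at least one output mass is not a dyadic rational.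
   Context: $Z$ is the Discrete Laplace distribution with shift $\mu$ and scale $s$ censored (clamped) to $[\ell,u]$. *)

(* Defs.v *)
From Stdlib Require Import Reals ZArith Lra Lia.
Open Scope R_scope.

Definition dlap_pmf (mu s : R) (k : R) : R :=
  (exp (1 / s) - 1) / (exp (1 / s) + 1) * exp (- Rabs (k - mu) / s).

Definition dlap_cdf (mu s : R) (x : R) : R :=
  if Rle_dec x mu then exp (1 / s) / (exp (1 / s) + 1) * exp (- (mu - x) / s)
  else 1 - 1 / (exp (1 / s) + 1) * exp (- (x - mu) / s).

Definition clamped_dlap_mass (l u mu : Z) (s : R) (k : Z) : R :=
  if (k =? l)%Z then dlap_cdf (IZR mu) s (IZR l)
  else if (k =? u)%Z then 1 - dlap_cdf (IZR mu) s (IZR (u - 1))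
  else if ((l <? k)%Z && (k <? u)%Z)%bool then dlap_pmf (IZR mu) s (IZR k)
  else 0.

Definition is_dyadic (x : R) : Prop :=
  exists t N : nat, x = INR t / 2 ^ N.

(* Main.v *)
From Stdlib Require Import Reals ZArith Znumtheory Zpow_facts Lia Lra.
Require Import Defs.

Local Open Scope Z_scope.
Lemma odd_rp2 (m : Z) : Z.odd m = true -> rel_prime m 2.
Proof.
  intros Hm. apply rel_prime_sym. apply prime_rel_prime. exact prime_2. intros [c Hc].
  rewrite Hc in Hm. rewrite Z.odd_mul in Hm. simpl in Hm. rewrite Bool.andb_false_r in Hm. discriminate.
Qed.

Local Open Scope Z_scope.
Lemma odd_div_pow2 (m e : Z) : 0 <= e -> Z.odd m = true -> 0 <= m -> (m | 2 ^ e) -> m = 1.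
Proof.
  intros He Hm Hm0 Hd.
  pose proof (odd_rp2 m Hm) as H2.
  apply (rel_prime_Zpower_r e) in H2; auto.
  apply Zgcd_1_rel_prime in H2.
  apply Z.divide_1_r_nonneg; auto.
  apply (Z.gauss _ (2^e)); auto. rewrite Z.mul_1_r. auto.
Qed.

Local Open Scope Z_scope.
Lemma odd_case (T t r A B : Z) : 0 <= A -> 0 <= B -> 0 < t < T -> T = 2 * (T / 2) ->
  Z.odd t = true -> (rel_prime t T) ->
  r * (T + t) * 2 ^ A = t * (T - t) * 2 ^ B -> (exists e, 0 <= e /\ T = 2 ^ e) -> False.
Proof.
  intros HA HB Ht HT Hodd Hrp Heq [e [He HTe]].
  set (m := T + t).
  assert (Hd1 : (m | t * ((T - t) * 2 ^ B))).
  { exists (r * 2 ^ A). rewrite Z.mul_assoc, <- Heq. unfold m. ring. }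
  assert (Hg : Z.gcd m t = 1).
  { unfold m. rewrite Z.gcd_comm, Z.gcd_add_diag_r. apply Zgcd_1_rel_prime. auto. }
  apply Z.gauss in Hd1; auto.
  assert (Hd2 : (m | 2 ^ (e + 1 + B))).
  { assert (E : 2 ^ (e + 1 + B) = (T - t) * 2 ^ B + m * 2 ^ B).
    { rewrite !Z.pow_add_r by lia. rewrite <- HTe. unfold m. ring. }
    rewrite E. apply Z.divide_add_r; auto. apply Z.divide_mul_l, Z.divide_refl. }
  apply odd_div_pow2 in Hd2; try lia.
  unfold m. rewrite Z.odd_add, Hodd. rewrite HT, Z.odd_mul. reflexivity.
Qed.

Local Open Scope Z_scope.
Lemma zkey (N : nat) : forall t r A B : Z, 0 <= A -> 0 <= B -> 0 < t < 2 ^ Z.of_nat N ->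
  r * (2 ^ Z.of_nat N + t) * 2 ^ A = t * (2 ^ Z.of_nat N - t) * 2 ^ B -> False.
Proof.
  induction N as [|n IH]; intros t r A B HA HB Ht Heq.
  - simpl in Ht. lia.
  - assert (HP : 2 ^ Z.of_nat (S n) = 2 * 2 ^ Z.of_nat n).
    { rewrite Nat2Z.inj_succ, Z.pow_succ_r by lia. reflexivity. }
    assert (HPpos : 0 < 2 ^ Z.of_nat n) by (apply Z.pow_pos_nonneg; lia).
    destruct (Z.odd t) eqn:Ho.
    + eapply (odd_case (2 ^ Z.of_nat (S n)) t r A B); eauto.
      * rewrite HP. rewrite (Z.mul_comm 2 (2 ^ Z.of_nat n)) at 2. rewrite Z.div_mul by lia. ring.
      * apply rel_prime_Zpower_r. lia. apply odd_rp2; auto.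
      * exists (Z.of_nat (S n)). split; auto. lia.
    + pose proof (Z.div2_odd t) as Hd. rewrite Ho in Hd. change (Z.b2z false) with 0 in Hd.
      set (t1 := Z.div2 t) in *.
      rewrite HP in Heq, Ht.
      apply (IH t1 r A (B + 1)); try lia.
      rewrite Z.pow_add_r by lia.
      apply (Z.mul_reg_l _ _ 2). lia.
      rewrite Hd in Heq.
      replace (2 * (r * (2 ^ Z.of_nat n + t1) * 2 ^ A)) with (r * (2 * 2 ^ Z.of_nat n + (2 * t1 + 0)) * 2 ^ A) by ring.
      rewrite Heq. ring.
Qed.
Local Open Scope R_scope.

Lemma real_key (a : R) : 1 < a -> is_dyadic ((a - 1) / (a + 1)) ->
  is_dyadic ((a - 1) / (a + 1) * / a) -> False.
Proof.
  intros Ha [t [N HX]] [r [M HY]].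
  set (X := (a - 1) / (a + 1)) in *.
  assert (HT : 0 < 2 ^ N) by (apply pow_lt; lra).
  assert (HP : 0 < 2 ^ M) by (apply pow_lt; lra).
  assert (H : X * / a * (1 + X) = X * (1 - X)) by (unfold X; field; lra).
  assert (HX0 : 0 < X) by (unfold X; apply Rdiv_lt_0_compat; lra).
  assert (HX1 : X < 1) by (unfold X; apply Rmult_lt_reg_r with (a + 1); [lra|];
    unfold Rdiv; rewrite Rmult_assoc, Rinv_l by lra; lra).
  rewrite HY, HX in H. rewrite HX in HX0, HX1.
  assert (Ht0 : 0 < INR t).
  { apply Rmult_lt_reg_r with (/ 2 ^ N). apply Rinv_0_lt_compat; lra. lra. }
  assert (Ht1 : INR t < 2 ^ N).
  { apply Rmult_lt_reg_r with (/ 2 ^ N). apply Rinv_0_lt_compat; lra.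
    rewrite Rinv_r by lra. exact HX1. }
  assert (E : INR r * 2 ^ N * (2 ^ N + INR t) = INR t * (2 ^ N - INR t) * 2 ^ M).
  { transitivity (2 ^ M * 2 ^ N * 2 ^ N * (INR r / 2 ^ M * (1 + INR t / 2 ^ N))).
    field; lra. rewrite H. field; lra. }
  rewrite !INR_IZR_INZ in E. rewrite !INR_IZR_INZ in Ht0. rewrite !INR_IZR_INZ in Ht1.
  change 2 with (IZR 2) in E, Ht1.
  repeat rewrite pow_IZR in E. repeat rewrite pow_IZR in Ht1.
  apply lt_IZR in Ht0. apply lt_IZR in Ht1.
  apply (zkey N (Z.of_nat t) (Z.of_nat r) (Z.of_nat N) (Z.of_nat M)); try lia.
  apply eq_IZR. rewrite !mult_IZR, plus_IZR, minus_IZR.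
  rewrite <- (Rmult_comm (IZR (2 ^ Z.of_nat N))), <- Rmult_assoc, (Rmult_comm (IZR (2 ^ Z.of_nat N))).
  exact E.
Qed.

Lemma mass_at (l u mu k : Z) (s : R) : (l < k)%Z -> (k < u)%Z ->
  clamped_dlap_mass l u mu s k = dlap_pmf (IZR mu) s (IZR k).
Proof.
  intros H1 H2. unfold clamped_dlap_mass.
  replace (k =? l)%Z with false by (symmetry; apply Z.eqb_neq; lia).
  replace (k =? u)%Z with false by (symmetry; apply Z.eqb_neq; lia).
  replace (l <? k)%Z with true by (symmetry; apply Z.ltb_lt; lia).
  replace (k <? u)%Z with true by (symmetry; apply Z.ltb_lt; lia).
  reflexivity.
Qed.

Theorem mainTheorem12 (l mu u : Z) (s : R) :
  (l < mu)%Z -> (mu < u)%Z -> 0 < s ->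
  (u - l + 1 >= 4)%Z ->
  exists k : Z, (l <= k <= u)%Z /\ ~ is_dyadic (clamped_dlap_mass l u mu s k).
Proof.
  intros H1 H2 Hs H4.
  set (a := exp (1 / s)).
  assert (Ha : 1 < a).
  { unfold a. assert (Hp : 0 < 1 / s) by (apply Rdiv_lt_0_compat; lra). pose proof (exp_increasing 0 (1 / s) Hp) as He. rewrite exp_0 in He. exact He. }
  assert (Hm : clamped_dlap_mass l u mu s mu = (a - 1) / (a + 1)).
  { rewrite mass_at by lia. unfold dlap_pmf. fold a.
    replace (- Rabs (IZR mu - IZR mu) / s) with 0.
    rewrite exp_0. ring. unfold Rminus. rewrite Rplus_opp_r, Rabs_R0. field. lra. }
  assert (Hn : forall k, (l < k)%Z -> (k < u)%Z -> (k = mu - 1 \/ k = mu + 1)%Z ->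
     clamped_dlap_mass l u mu s k = (a - 1) / (a + 1) * / a).
  { intros k Hk1 Hk2 Hk. rewrite mass_at by lia. unfold dlap_pmf. fold a.
    replace (- Rabs (IZR k - IZR mu) / s) with (- (1 / s)).
    rewrite exp_Ropp. reflexivity.
    assert (Rabs (IZR k - IZR mu) = 1).
    { destruct Hk as [Hk|Hk]; subst k; rewrite ?minus_IZR, ?plus_IZR.
      replace (IZR mu - IZR 1 - IZR mu) with (-1) by (simpl; ring). unfold Rabs; destruct Rcase_abs; lra.
      replace (IZR mu + IZR 1 - IZR mu) with 1 by (simpl; ring). apply Rabs_R1. }
    rewrite H. field. lra. }
  destruct (Classical_Prop.classic (is_dyadic (clamped_dlap_mass l u mu s mu))) as [Hd|Hd].
  2: { exists mu. split; [lia | exact Hd]. }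
  rewrite Hm in Hd.
  destruct (Z_lt_ge_dec l (mu - 1)) as [Hl|Hl].
  - exists (mu - 1)%Z. split; [lia|]. rewrite Hn by lia. intro Hy. exact (real_key a Ha Hd Hy).
  - exists (mu + 1)%Z. split; [lia|]. rewrite Hn by lia. intro Hy. exact (real_key a Ha Hd Hy).
Qed.
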